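(* Let $\delta_j,\delta_k$ be coprime integers with $1<\delta_j<\delta_k$, let $r=\delta_k\bmod\delta_j$ and let $f\colon \mathcal B(\delta_j,r)\to\mathcal B(\delta_k,\delta_j)$, $f(x',y')=(y',\,x'-y'\lfloor \delta_k/\delta_j\rfloor)$. Let $(1,y)\in\mathcal B(\delta_k,\delta_j)$. Then $(1,y)\notin f(\mathcal B(\delta_j,r))$ if and only if $-\lfloor\delta_k/\delta_j\rfloor<y\le 0$.
   Context: For coprime positive integers $p,q$ and $i\in\{1,\ldots,\max\{p,q\}\}$, the $\lambda$-B\'ezout couple of $i$ for $(p,q)$ is the unique $(x,y)\in\mathbb Z^2$ with $xp+yq=i$ and $0<y\le p$, and the $\mu$-B\'ezout couple of $i$ for $(p,q)$ is the unique $(x,y)\in\mathbb Z^2$ with $xp+yq=i$ and $0<x\le q$. $\mathcal B(p,q)$ denotes the set of all $\lambda$- and $\mu$-B\'ezout couples for $(p,q)$ (for all such $i$). The map $f$ takes values in $\mathcal B(\delta_k,\delta_j)$. *)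

(* Defs.v *)
From HB Require Import structures.
From mathcomp Require Import all_boot all_order all_algebra.
Set Implicit Arguments. Unset Strict Implicit. Unset Printing Implicit Defensive.
Import Order.TTheory GRing.Theory Num.Theory.
Local Open Scope ring_scope.

Definition lambda_couple (p q i : int) (c : int * int) : Prop :=
  c.1 * p + c.2 * q = i /\ 0 < c.2 <= p.

Definition mu_couple (p q i : int) (c : int * int) : Prop :=
  c.1 * p + c.2 * q = i /\ 0 < c.1 <= q.

Definition bezout_set (p q : int) (c : int * int) : Prop :=
  exists i : int, 1 <= i <= Num.max p q /\ (lambda_couple p q i c \/ mu_couple p q i c).

Definition fmap (dj dk : nat) (c : int * int) : int * int :=
  (c.2, c.1 - c.2 * ((dk %/ dj)%N)%:Z).

(* Main.v *)
Require Import Defs.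
From HB Require Import structures.
From mathcomp Require Import all_boot all_order all_algebra.
From mathcomp Require Import zify.
Import Order.TTheory GRing.Theory Num.Theory.
Local Open Scope ring_scope.

Lemma aux1 (y d : int) : 0 < d -> y * d <= 0 -> y <= 0.
Proof. move=> h1 h2. nia. Qed.
Lemma aux2 (y q d r : int) : 0 < r -> r < d -> 1 <= (y + q) * d + r -> -q <= y.
Proof. move=> *. nia. Qed.
Lemma aux3 (a d r : int) : 0 < d -> 0 < r -> 1 <= a -> a * d + r <= d -> False.
Proof. move=> *. nia. Qed.

Theorem proposition3p7 (dj dk : nat) (hcop : coprime dj dk)
    (h1 : (1 < dj)%N) (h2 : (dj < dk)%N) (y : int)
    (hy : bezout_set dk%:Z dj%:Z (1, y)) :
  (~ exists c : int * int,
        bezout_set dj%:Z ((dk %% dj)%N)%:Z c /\ fmap dj dk c = (1, y))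
  <-> (- ((dk %/ dj)%N)%:Z < y <= 0).
Proof.
have hdk := divn_eq dk dj.
have hr : (dk %% dj < dj)%N by rewrite ltn_mod; lia.
have hr0 : (0 < dk %% dj)%N.
  rewrite lt0n; apply/negP => /eqP h0.
  move: hcop; rewrite /coprime gcdnC -gcdn_modl h0 gcd0n; lia.
rewrite /fmap.
set q := (dk %/ dj)%N in hdk *.
set r := (dk %% dj)%N in hdk hr hr0 *.
have hdkZ : dk%:Z = q%:Z * dj%:Z + r%:Z by rewrite hdk; lia.
have hm : Num.max dj%:Z r%:Z = dj%:Z by rewrite max_l //; lia.
have hmax : Num.max dk%:Z dj%:Z = dk%:Z by rewrite max_l //; lia.
have [yle yge] : y <= 0 /\ - q%:Z <= y.
  move: hy => [i [hi hc]]; rewrite hmax in hi.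
  have hl : dk%:Z + y * dj%:Z = i by case: hc => [[/= hl _]|[/= hl _]]; rewrite -hl mul1r.
  split.
    apply: (@aux1 y dj%:Z); lia.
  have e : (y + q%:Z) * dj%:Z = y * dj%:Z + q%:Z * dj%:Z by rewrite mulrDl.
  apply: (@aux2 y q%:Z dj%:Z r%:Z); lia.
split.
- move=> hn; apply/andP; split=> //.
  suff hne : y != - q%:Z by lia.
  apply/eqP => hyq; apply: hn.
  exists (0, 1); split; last by rewrite /= hyq; congr pair; lia.
  exists r%:Z; split.
    rewrite hm; lia.
  left; split => /=; lia.
- move=> /andP [hlt _] [[a b] [[j [hj hc]] /= [hb ha]]].
  rewrite hm in hj; subst b.
  have hq1 : 1 <= a by lia.
  have hl : a * dj%:Z + r%:Z = j by case: hc => [[/= hc _]|[/= hc _]]; rewrite -hc mul1r.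
  apply: (@aux3 a dj%:Z r%:Z); lia.
Qed.
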